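(* Let $n\ge2$, $1\le k\le n-1$ and $n-1\ge m_1>\dots>m_k\ge1$. Let the complement of $\{n-m_1,\dots,n-m_k\}$ in $\{1,\dots,n\}$ be $\{j_1<j_2<\dots<j_{n-k}\}$ (so $j_{n-k}=n$) and set $C(m_1,\dots,m_k)=(n-j_1,\dots,n-j_{n-k-1})$. Then $C(C(m_1,\dots,m_k))=(m_1,\dots,m_k)$. Write \[ \omega_{m_1,\dots,m_k}:=d_{m_1}\cdots d_{m_k}\Delta=\sum_{1\le i_1<\dots<i_k\le n}h^{m_1\dots m_k}_{i_1\dots i_k}\,dx_{i_1}\wedge\cdots\wedge dx_{i_k}, \] where $\Delta=\prod_{1\le i<j\le n}(x_i-x_j)$. Then the coefficient of the monomial $x_1^{n-j_1}x_2^{n-j_2}\cdots x_{n-k-1}^{n-j_{n-k-1}}$ in $h^{m_1\dots m_k}_{n-k+1,n-k+2,\dots,n}$ is $\pm k!\,m_1!\cdots m_k!$. Finally, if $n-1\ge r_1>\dots>r_k\ge1$ and this monomial occurs with non-zero coefficient in $h^{r_1\dots r_k}_{n-k+1,n-k+2,\dots,n}$, then $r_i=m_i$ for all $i=1,\dots,k$.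
   Context: Forms live in $\mathbb{R}[x_1,\dots,x_n]\otimes\wedge\mathbb{R}^n$. With $\partial_i=\partial/\partial x_i$, $d_j(h\,dx_{i_1}\wedge\cdots\wedge dx_{i_k})=\sum_{l=1}^n(\partial_l^jh)\,dx_l\wedge dx_{i_1}\wedge\cdots\wedge dx_{i_k}$, extended linearly. *)

(* Defs.v *)
From HB Require Import structures.
From mathcomp Require Import all_boot all_order all_algebra.
From mathcomp Require Import mpoly.
Set Implicit Arguments. Unset Strict Implicit. Unset Printing Implicit Defensive.
Import Order.TTheory GRing.Theory Num.Theory.
Local Open Scope ring_scope.

(* Variables x_1..x_n are 'X_0 .. 'X_(n-1) (0-based indices 'I_n).
   A differential form in R[x]⊗∧R^n is represented by its coefficient
   function on the standard basis: w J is the coefficient of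
   dx_{i_1}∧...∧dx_{i_k} where J = {i_1 < ... < i_k}. *)
Definition form (R : nzRingType) (n : nat) := {set 'I_n} -> {mpoly R[n]}.

Definition pderivn (R : nzRingType) (n : nat) (l : 'I_n) (j : nat)
  (p : {mpoly R[n]}) : {mpoly R[n]} := iter j (mderiv l) p.

(* d_j (h dx_I) = sum_l (∂_l^j h) dx_l ∧ dx_I ; on the basis,
   dx_l ∧ dx_I = 0 if l ∈ I, and = (-1)^{#{i∈I | i<l}} dx_{I ∪ {l}} otherwise. *)
Definition dj (R : nzRingType) (n : nat) (j : nat) (w : form R n) : form R n :=
  fun J => \sum_(l in J)
     (-1) ^+ #|[set i in J | (i < l)%N]| *: pderivn l j (w (J :\ l)).

Definition Vdm (R : nzRingType) (n : nat) : {mpoly R[n]} :=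
  \prod_(i < n) \prod_(j < n | (i < j)%N) ('X_i - 'X_j).

Definition Vdm_form (R : nzRingType) (n : nat) : form R n :=
  fun J => if J == set0 then @Vdm R n else 0.

Definition omega (R : nzRingType) (n : nat) (m : seq nat) : form R n :=
  foldr (fun j w => dj j w) (@Vdm_form R n) m.

(* h^{m}_{n-k+1,...,n} : coefficient of dx_{n-k+1}∧...∧dx_n
   (0-based: indices n-k, ..., n-1) *)
Definition h_last (R : nzRingType) (n k : nat) (m : seq nat) : {mpoly R[n]} :=
  @omega R n m [set i : 'I_n | (n - k <= i)%N].

Definition compl_js (n : nat) (m : seq nat) : seq nat :=
  [seq j <- iota 1 n | j \notin [seq (n - mi)%N | mi <- m]].

(* C(m_1,...,m_k) = (n - j_1, ..., n - j_{n-k-1}) : drop the last j. *)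
Definition Cop (n : nat) (m : seq nat) : seq nat :=
  [seq (n - j)%N | j <- take (size (compl_js n m)).-1 (compl_js n m)].

Definition Cmono (n : nat) (m : seq nat) : 'X_{1..n} :=
  [multinom nth 0%N (Cop n m) i | i < n].

Definition admissible (n k : nat) (m : seq nat) : bool :=
  [&& size m == k, sorted gtn m & all (fun x => (1 <= x <= n - 1)%N) m].

(* Main.v *)
Require Import Defs.
From HB Require Import structures.
From mathcomp Require Import all_boot all_order all_algebra all_fingroup.
From mathcomp Require Import mpoly.
From mathcomp Require Import ring zify.
Set Implicit Arguments. Unset Strict Implicit. Unset Printing Implicit Defensive.
Import Order.TTheory GRing.Theory Num.Theory.
Local Open Scope ring_scope.

Section VdmSec.
Variables (R : comNzRingType) (n : nat).
Local Notation P := {mpoly R[n]}.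

Definition mono (s : 'S_n) : 'X_{1..n} := [multinom ((s^-1)%g i : nat) | i < n].

Lemma mcoeff_sign (b : nat) (p : P) m : ((-1)^+b * p)@_m = (-1)^+b * p@_m.
Proof.
elim: b => [|b IH]; first by rewrite !expr0 !mul1r.
by rewrite !exprS !mulN1r !mulNr mcoeffN IH.
Qed.

Definition Nsg := (\sum_(i<n) #|[pred j : 'I_n | (i < j)%N]|)%N.

Lemma Vdm_det : Vdm R n = (-1)^+ Nsg * \det (Vandermonde n (\row_j ('X_j : P))).
Proof.
rewrite det_Vandermonde /Vdm.
rewrite (eq_bigr (fun i : 'I_n => (-1)^+#|[pred j : 'I_n | (i<j)%N]| *
   \prod_(j<n | (i<j)%N) ((\row_j ('X_j:P)) 0 j - (\row_j ('X_j : P)) 0 i))); last first.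
  move=> i _; rewrite -(prodrN [pred j : 'I_n | (i<j)%N]).
  by apply eq_bigr => j _; rewrite !mxE opprB.
rewrite big_split /=; congr (_ * _).
rewrite /Nsg (big_morph (fun k => (-1)^+k : P) (fun a b => exprD _ a b) (expr0 _)) //.
Qed.

Lemma VdmE E : (Vdm R n)@_E = (-1)^+Nsg * \sum_(s : 'S_n) (-1)^+s * (mono s == E)%:R.
Proof.
rewrite Vdm_det mcoeff_sign; congr (_ * _).
rewrite /determinant raddf_sum; apply eq_bigr => s _.
rewrite [LHS]/=.
rewrite mcoeff_sign; congr (_ * _).
rewrite -mcoeffX; congr mcoeff.
rewrite (mpolyXE R s (mono s)); apply eq_bigr => i _.
by rewrite !mxE mnmE permK.
Qed.

Definition swapm (x y : 'I_n) (E : 'X_{1..n}) : 'X_{1..n} :=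
  [multinom E (tperm x y i) | i < n].

Lemma swapmK x y : involutive (swapm x y).
Proof. by move=> E; apply/mnmP => i; rewrite !mnmE tpermK. Qed.

Lemma mono_mulT (s : 'S_n) x y : mono (s * tperm x y)%g = swapm x y (mono s).
Proof. by apply/mnmP => i; rewrite !mnmE invMg permM tpermV. Qed.

Lemma mono_inj : injective mono.
Proof.
move=> s t /mnmP H; apply: invg_inj; apply/permP => i.
by apply: val_inj; have := H i; rewrite !mnmE.
Qed.

Lemma Vdm_alt E x y : x != y -> (Vdm R n)@_(swapm x y E) = - (Vdm R n)@_E.
Proof.
move=> xy; rewrite !VdmE (reindex_inj (mulIg (tperm x y))) /= -mulrN -sumrN.
congr (_ * _); apply eq_bigr => s _.
rewrite odd_permM odd_tperm xy signr_addb mono_mulT (inj_eq (can_inj (swapmK x y))).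
by rewrite expr1 mulrN1 mulNr.
Qed.

Lemma Vdm_mono s0 : (Vdm R n)@_(mono s0) = (-1)^+Nsg * (-1)^+s0.
Proof.
rewrite VdmE (bigD1 s0) //= eqxx mulr1 big1 ?addr0 // => s ns.
by rewrite (inj_eq mono_inj) (negbTE ns) mulr0.
Qed.

Lemma Vdm_nz E : (Vdm R n)@_E != 0 -> exists s, mono s = E.
Proof.
case: (pickP (fun s => mono s == E)) => [s /eqP e|H]; first by move=> _; exists s.
by rewrite VdmE big1 ?mulr0 ?eqxx // => s _; rewrite H mulr0.
Qed.
End VdmSec.

Section Key.
Variables (R : comNzRingType) (n : nat).
Local Notation P := {mpoly R[n]}.

Fixpoint Fill (ls : seq 'I_n) (vs : seq nat) : 'X_{1..n} :=
  match ls, vs with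
  | l :: ls', v :: vs' => (U_(l) *+ v + Fill ls' vs')%MM
  | _, _ => 0%MM
  end.

Lemma FillE ls vs i : uniq ls ->
  Fill ls vs i = if i \in ls then nth 0%N vs (index i ls) else 0%N.
Proof.
elim: ls vs => [|l ls IH] [|v vs] /=; rewrite ?mnm0E ?nth_nil ?if_same //.
case/andP => nl U; rewrite mnmDE mulmnE mnm1E IH // in_cons.
case: (eqVneq l i) => [<-|ne] /=; first by rewrite ?eqxx (negbTE nl) mul1n addn0.
by rewrite ?(eq_sym i) ?(negbTE ne) mul0n.
Qed.

Definition ltO : rel 'I_n := fun x y => (x < y)%N.

Lemma ltO_trans : transitive ltO.
Proof. by move=> y x z; apply: ltn_trans. Qed.

Lemma ltO_irr : irreflexive ltO.
Proof. by move=> x; apply: ltnn. Qed.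

Definition omegap (p : P) (ms : seq nat) : {set 'I_n} -> P :=
  foldr (fun j w => dj j w) (fun J => if J == set0 then p else 0) ms.

Lemma pderivn_coef (l : 'I_n) (a : nat) (q : P) (M : 'X_{1..n}) : M l = 0%N ->
  (pderivn l a q)@_M = a`!%:R * q@_(M + U_(l) *+ a).
Proof.
elim: a q => [|a IH] q Ml.
  by rewrite /pderivn /= mul1r; congr mcoeff; apply/mnmP=> i; rewrite mnmDE mulmnE muln0 addn0.
rewrite /pderivn iterSr -/(pderivn l a (mderiv l q)) IH // mcoeff_mderiv.
rewrite mnmDE mulmnE mnm1E eqxx Ml mul1n add0n mulrnAr -mulrnAl -mulrnA mulnC -factS.
congr (_ * _); congr mcoeff; apply/mnmP => i.
by rewrite !mnmDE !mulmnE mulnSr addnA.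
Qed.

Section Alt.
Variable p : P.
Hypothesis alt : forall E x y, x != y -> p@_(swapm x y E) = - p@_E.

Lemma move_front (ls : seq 'I_n) (vs : seq nat) (M : 'X_{1..n}) (l : 'I_n) : uniq ls -> l \in ls -> size vs = size ls ->
  (forall x, x \in ls -> M x = 0%N) ->
  p@_(M + Fill (l :: rem l ls) vs) = (-1)^+(index l ls) * p@_(M + Fill ls vs).
Proof.
elim: ls vs M => [|y t IH] vs M //= /andP[yt U] lin.
case: vs => [|a vs] //= [sz] M0.
case: (eqVneq y l) => [<-|ne]; first by rewrite ?eqxx expr0 mul1r.
rewrite ?(negbTE ne) /=.
have lt : l \in t by move: lin; rewrite in_cons eq_sym (negbTE ne).
case: vs sz => [|b vs] sz; first by case: t {IH yt U lin M0 ne} sz lt.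
set M' := (M + U_(y) *+ a)%MM.
have M'0 : forall x, x \in t -> M' x = 0%N.
  move=> x xt; rewrite /M' mnmDE mulmnE mnm1E M0 ?in_cons ?xt ?orbT //.
  by case: eqP => // e; move: yt; rewrite e xt.
rewrite exprS mulN1r mulNr.
have -> : (M + (U_(y) *+ a + Fill t (b :: vs)))%MM = (M' + Fill t (b :: vs))%MM.
  by apply/mnmP => i; rewrite /M' !mnmDE addnA.
rewrite -(IH (b :: vs) M') //.
have ne' : l != y by rewrite eq_sym.
rewrite -(alt _ ne').
congr mcoeff; apply/mnmP => i.
have Fl : Fill (rem l t) vs l = 0%N.
  by rewrite FillE ?rem_uniq // (mem_rem_uniq _ U) inE eqxx.
have Fy : Fill (rem l t) vs y = 0%N.
  rewrite FillE ?rem_uniq // (mem_rem_uniq _ U) inE.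
  by case: (y \in t) yt; rewrite ?andbF.
have Ml : M l = 0%N by apply: M0; rewrite in_cons lt orbT.
have My : M y = 0%N by apply: M0; rewrite in_cons eqxx.
rewrite /swapm mnmE /M' /=.
case: (tpermP l y i) => [->|->|hy hl].
- rewrite !mnmDE !mulmnE !mnm1E ?eqxx ?(negbTE ne) ?(negbTE ne') Ml My Fl Fy.
  by rewrite !mul1n !mul0n !addn0 !add0n.
- rewrite !mnmDE !mulmnE !mnm1E ?eqxx ?(negbTE ne) ?(negbTE ne') Ml My Fl Fy.
  by rewrite !mul1n !mul0n !addn0 !add0n.
- rewrite !mnmDE !mulmnE !mnm1E.
  have -> : (l == i) = false by apply/eqP => e; apply: hy; rewrite e.
  have -> : (y == i) = false by apply/eqP => e; apply: hl; rewrite e.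
  by rewrite !mul0n !addn0.
Qed.

Lemma count_lt_index (ls : seq 'I_n) l : sorted ltO ls -> l \in ls ->
  count (fun i : 'I_n => (i < l)%N) ls = index l ls.
Proof.
elim: ls => [|y t IH] //= S lin.
have A := order_path_min ltO_trans S.
case: (eqVneq y l) => [e|ne].
  rewrite -e ltnn add0n; apply/eqP; rewrite -leqn0 leqNgt -has_count.
  by apply/hasPn => x xt /=; rewrite -leqNgt ltnW //; apply: (allP A).
have lt : l \in t by move: lin; rewrite in_cons eq_sym (negbTE ne).
have yl : (y < l)%N := allP A l lt.
by rewrite yl IH // (path_sorted S).
Qed.

Lemma card_lt (ls : seq 'I_n) l : sorted ltO ls -> l \in ls ->
  #|[set i in [set x in ls] | (i < l)%N]| = index l ls.
Proof.
move=> S lin; have U := sorted_uniq ltO_trans ltO_irr S.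
have -> : [set i in [set x in ls] | (i < l)%N] = [set x in filter (fun i : 'I_n => (i < l)%N) ls].
  by apply/setP => i; rewrite !inE mem_filter andbC.
by rewrite cardsE (card_uniqP _) ?filter_uniq // size_filter count_lt_index.
Qed.

Lemma key (ms : seq nat) (ls : seq 'I_n) (M : 'X_{1..n}) :
  sorted ltO ls -> size ls = size ms -> (forall x, x \in ls -> M x = 0%N) ->
  (omegap p ms [set x in ls])@_M
    = ((size ms)`! * \prod_(a <- ms) a`!)%:R * p@_(M + Fill ls ms).
Proof.
elim: ms ls M => [|a ms IH] ls M.
  case: ls => //= _ _ _.
  have -> : [set x in [::] : seq 'I_n] = set0 by apply/setP => x; rewrite !inE.
  rewrite eqxx big_nil mul1r; congr mcoeff; apply/mnmP => i.
  by rewrite mnmDE mnm0E addn0.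
move=> S sz M0; have U := sorted_uniq ltO_trans ltO_irr S.
rewrite /= /dj raddf_sum.
set C := ((a`! * ((size ms)`! * \prod_(a <- ms) a`!))%:R * p@_(M + Fill ls (a :: ms))).
rewrite (eq_bigr (fun _ => C)); last first.
  move=> l; rewrite inE => lin.
  rewrite [LHS]/= mcoeffZ pderivn_coef; last by apply: M0.
  have -> : [set x in ls] :\ l = [set x in rem l ls].
    by apply/setP => x; rewrite !inE (mem_rem_uniq l U) inE.
  rewrite IH; first last.
  - move=> x; rewrite (mem_rem_uniq l U) inE => /andP[xl xls].
    by rewrite mnmDE mulmnE mnm1E eq_sym (negbTE xl) mul0n addn0 M0.
  - by rewrite size_rem // sz.
  - by rewrite rem_filter //; apply: sorted_filter => //; apply: ltO_trans.
  have -> : (M + U_(l) *+ a + Fill (rem l ls) ms)%MM = (M + Fill (l :: rem l ls) (a :: ms))%MM.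
    by apply/mnmP => i; rewrite /= !mnmDE addnA.
  rewrite move_front // card_lt // /C.
  set s := (-1) ^+ index l ls; set X := p@_ _.
  have sq : s * s = 1 by rewrite /s -exprD -signr_odd addnn odd_double expr0.
  rewrite mulrCA [s * (_ * _)]mulrCA [s * (s * X)]mulrA sq mul1r.
  by rewrite [in RHS]natrM mulrA.
rewrite sumr_const cardsE (card_uniqP U) sz /C.
rewrite big_cons factS -mulrnAl -mulr_natr -natrM.
by congr (_%:R * _); rewrite /=; ring.
Qed.

End Alt.
End Key.

Lemma gtn_trans : transitive gtn.
Proof. by move=> y x z h1 h2; apply: ltn_trans h2 h1. Qed.
Lemma gtn_irr : irreflexive gtn.
Proof. by move=> x; apply: ltnn. Qed.
Lemma gtn_uniq (s : seq nat) : sorted gtn s -> uniq s.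
Proof. exact: (sorted_uniq gtn_trans gtn_irr). Qed.

Section Comb.
Variable n : nat.
Hypothesis n0 : (0 < n)%N.

Lemma Cop_split c : 0%N \notin c -> Cop n c =
  [seq (n - j)%N | j <- [seq j <- iota 1 n.-1 | j \notin [seq (n - x)%N | x <- c]]].
Proof.
move=> c0; rewrite /Cop /compl_js.
have -> : iota 1 n = iota 1 n.-1 ++ [:: n].
  by rewrite -[n in iota _ n](prednK n0) -[n.-1.+1]addn1 iotaD add1n prednK.
rewrite filter_cat /=.
have -> : (n \notin [seq (n - x)%N | x <- c]) = true.
  apply/negP => /mapP [x xc e].
  have x0 : x = 0%N by lia.
  by move: c0; rewrite -x0 xc.
by rewrite size_cat /= addn1 /= take_size_cat.
Qed.

Lemma mem_Cop c x : 0%N \notin c -> (x \in Cop n c) = (0 < x < n)%N && (x \notin c).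
Proof.
move=> c0; rewrite Cop_split //; apply/mapP/andP => [[j] | [/andP[xb1 xb2] xc]].
  rewrite mem_filter mem_iota => /andP [jc /andP[jb1 jb2]] ->; split; first by apply/andP; lia.
  apply/negP => xc; move/negP: jc; apply; apply/mapP; exists (n - j)%N => //; lia.
exists (n - x)%N; last by lia.
rewrite mem_filter mem_iota; apply/andP; split; last by apply/andP; lia.
apply/mapP => [[y yc e]].
have xy : x = y by lia.
by move: xc; rewrite xy yc.
Qed.

Lemma sorted_Cop c : 0%N \notin c -> sorted gtn (Cop n c).
Proof.
move=> c0; rewrite Cop_split //.
apply: (homo_sorted_in (P := [pred j | (j < n)%N]) (e := ltn)).
- move=> a b; rewrite !inE => ha hb ab; rewrite /gtn /=; lia.
- apply/allP => j; rewrite mem_filter mem_iota => /andP[_ /andP[_ h]]; rewrite inE; lia.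
- by apply: sorted_filter; [exact: ltn_trans | exact: iota_ltn_sorted].
Qed.

Variables (k : nat) (m : seq nat).
Hypothesis kb : (1 <= k <= n - 1)%N.
Hypothesis adm : admissible n k m.

Let szm : size m = k. Proof. by case/and3P: adm => /eqP. Qed.
Let sm : sorted gtn m. Proof. by case/and3P: adm. Qed.
Let mb x : x \in m -> (0 < x < n)%N.
Proof. case/and3P: adm => _ _ /allP A /A /andP[h1 h2]; apply/andP; lia. Qed.
Let m0 : 0%N \notin m.
Proof. by apply/negP => /mb. Qed.
Let um : uniq m. Proof. exact: gtn_uniq sm. Qed.
Let c0 : 0%N \notin Cop n m. Proof. by rewrite mem_Cop // ltnn. Qed.

Lemma CopK : Cop n (Cop n m) = m.
Proof.
apply: (irr_sorted_eq gtn_trans gtn_irr); [exact: sorted_Cop | exact: sm |].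
move=> x; rewrite mem_Cop // mem_Cop //.
case: (boolP (x \in m)) => xm; first by rewrite (mb xm).
by rewrite andbT andbN.
Qed.

Lemma perm_L : perm_eq (Cop n m ++ 0%N :: m) (iota 0 n).
Proof.
apply: uniq_perm; [|exact: iota_uniq|].
  rewrite cat_uniq /= m0 um (gtn_uniq (sorted_Cop m0)) andbT /=.
  rewrite (negbTE c0) andbT /=; apply/hasPn => x xm.
  by rewrite mem_Cop // xm andbF.
move=> x; rewrite mem_cat mem_Cop // in_cons mem_iota add0n leq0n /=.
case: (boolP (x \in m)) => xm; first by rewrite ?xm !orbT; case/andP: (mb xm) => _ ->.
rewrite ?(negbTE xm) andbT orbF; case: x {xm} => [|x] /=; first by rewrite n0.
by rewrite orbF.
Qed.

Lemma size_Cop : size (Cop n m) = (n - k.+1)%N.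
Proof. have := perm_size perm_L; rewrite size_cat /= size_iota szm; lia. Qed.

End Comb.

Section Ls0.
Variables (n k : nat).
Hypothesis kn : (k <= n)%N.

Definition ls0 : seq 'I_n := filter (fun i : 'I_n => (n - k <= i)%N) (enum 'I_n).

Lemma val_ls0 : map val ls0 = iota (n - k) k.
Proof.
have e : map val ls0 = filter (fun x => (n - k <= x)%N) (iota 0 n).
  by rewrite -val_enum_ord filter_map.
rewrite e; apply: (irr_sorted_eq ltn_trans ltnn).
- by apply: sorted_filter; [exact: ltn_trans | exact: iota_ltn_sorted].
- exact: iota_ltn_sorted.
move=> x; rewrite mem_filter !mem_iota add0n subnK // leq0n /=.
Qed.

Lemma sorted_ls0 : sorted (@ltO n) ls0.
Proof. by have := iota_ltn_sorted (n - k) k; rewrite -val_ls0 sorted_map. Qed.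

Lemma uniq_ls0 : uniq ls0.
Proof. have := sorted_ls0; apply: sorted_uniq; [exact: ltO_trans|exact: ltO_irr]. Qed.

Lemma size_ls0 : size ls0 = k.
Proof. by rewrite -(size_map val) val_ls0 size_iota. Qed.

Lemma mem_ls0 (i : 'I_n) : (i \in ls0) = (n - k <= i)%N.
Proof. by rewrite mem_filter mem_enum andbT. Qed.

Lemma index_ls0 (i : 'I_n) : i \in ls0 -> index i ls0 = (i - (n - k))%N.
Proof.
move=> il; rewrite -(index_map val_inj) val_ls0.
have im : val i \in iota (n - k) k by rewrite -val_ls0 map_f.
have := nth_index 0%N im; rewrite nth_iota; last by rewrite -[X in (_ < X)%N](size_iota (n - k) k) index_mem.
move=> h; change (val i) with (nat_of_ord i) in h; change (val i) with (nat_of_ord i); lia.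
Qed.
End Ls0.

Theorem lemma11 (R : realFieldType) (n k : nat) (m : seq nat) :
  (2 <= n)%N -> (1 <= k <= n - 1)%N -> admissible n k m ->
  [/\ Cop n (Cop n m) = m,
      (exists s : bool,
         (h_last R n k m)@_(Cmono n m)
           = (-1) ^+ s * ((k`! * \prod_(mi <- m) mi`!)%N)%:R)
    & forall r : seq nat, admissible n k r ->
        (h_last R n k r)@_(Cmono n m) != 0 -> r = m].
Proof.
move=> n2 kb adm.
have n0 : (0 < n)%N by lia.
have kn : (k <= n)%N by case/andP: kb => _ h; lia.
have k1 : (k <= n - 1)%N by case/andP: kb.
case/and3P: (adm) => /eqP szm sm /allP bm.
have m0 : 0%N \notin m by apply/negP => /bm.
have sC := size_Cop n0 kb adm.
have Er : forall r, size r = k -> forall j : 'I_n,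
    (Cmono n m + Fill (ls0 n k) r)%MM j = nth 0%N (Cop n m ++ 0%N :: r) j.
  move=> r sr j; rewrite mnmDE /Cmono mnmE FillE ?uniq_ls0 // mem_ls0 nth_cat sC.
  case: (ltnP j (n - k.+1)) => h1.
    have -> : (n - k <= j)%N = false by apply/negbTE; rewrite -ltnNge; lia.
    by rewrite addn0.
  rewrite nth_default ?sC // add0n.
  case: (eqVneq (j : nat) (n - k.+1)%N) => e.
    have -> : (n - k <= j)%N = false by apply/negbTE; rewrite -ltnNge; lia.
    by rewrite e subnn.
  have -> : (n - k <= j)%N = true by lia.
  rewrite index_ls0 ?mem_ls0 //; last by lia.
  have -> : (j - (n - k.+1) = (j - (n - k)).+1)%N by lia.
  by [].
have hl : forall r, size r = k -> (h_last R n k r)@_(Cmono n m) =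
    ((k`! * \prod_(a <- r) a`!)%N)%:R * (Vdm R n)@_(Cmono n m + Fill (ls0 n k) r).
  move=> r sr; rewrite /h_last.
  have -> : [set i : 'I_n | (n - k <= i)%N] = [set x in ls0 n k].
    by apply/setP=> i; rewrite !inE mem_ls0.
  change (@omega R n r) with (omegap (Vdm R n) r).
  rewrite (key (@Vdm_alt R n)) ?sr //.
  - exact: sorted_ls0.
  - by rewrite size_ls0.
  - move=> x; rewrite mem_ls0 // => hx; rewrite /Cmono mnmE nth_default // sC; lia.
split.
- exact: (CopK n0 kb adm).
- have pl := perm_L n0 kb adm.
  set L := Cop n m ++ 0%N :: m in pl.
  have sL : size L = n by rewrite (perm_size pl) size_iota.
  have uL : uniq L by rewrite (perm_uniq pl) iota_uniq.
  have bL : forall i, (nth 0%N L i < n)%N.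
    move=> i; case: (ltnP i (size L)) => h; last by rewrite nth_default.
    by have := mem_nth 0%N h; rewrite (perm_mem pl) mem_iota.
  pose f := fun i : 'I_n => Ordinal (bL i).
  have finj : injective f.
    move=> i j /(congr1 val) /= /eqP; rewrite nth_uniq ?sL // => /eqP; exact: val_inj.
  pose s0 := ((perm finj)^-1)%g.
  have ms0 : mono s0 = (Cmono n m + Fill (ls0 n k) m)%MM.
    by apply/mnmP => i; rewrite mnmE invgK permE Er.
  exists (odd (Nsg n + odd_perm s0)).
  by rewrite hl // -ms0 Vdm_mono signr_odd exprD mulrC.
- move=> r adr.
  case/and3P: (adr) => /eqP szr sr /allP br.
  rewrite hl // => nz.
  have : (Vdm R n)@_(Cmono n m + Fill (ls0 n k) r) != 0.
    by apply: contraNneq nz => ->; rewrite mulr0.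
  case/Vdm_nz => s es.
  apply: (irr_sorted_eq gtn_trans gtn_irr sr sm).
  have sub : {subset m <= r}.
    move=> x xm; have /andP[x0 xn] := bm x xm.
    have xn' : (x < n)%N by lia.
    pose x' := Ordinal xn'.
    have e : nth 0%N (Cop n m ++ 0%N :: r) (s x') = x.
      by rewrite -Er // -es mnmE permK.
    have jl : (s x' < size (Cop n m ++ 0%N :: r))%N.
      rewrite ltnNge; apply/negP => h; move: e; rewrite nth_default //; lia.
    have := mem_nth 0%N jl; rewrite e mem_cat mem_Cop // xm andbF in_cons /=.
    case/orP => [/eqP x00|//]; lia.
  have sz2 : (size r <= size m)%N by rewrite szr szm.
  have [_ H] := uniq_min_size (gtn_uniq sm) sub sz2.
  by move=> x; rewrite H.
Qed.
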